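(* Let $r\geq 2$ be an integer and let $b$ be a real number with $b\leq (r-1)^{r-1}$. Then every coefficient of the power series expansion of $\dfrac{1}{1-rt+bt^r}$ in $t$ around $t=0$ is strictly positive. *)

(* Defs.v *)
From HB Require Import structures.
From mathcomp Require Import all_boot all_order all_algebra.
Set Implicit Arguments. Unset Strict Implicit. Unset Printing Implicit Defensive.
Import Order.TTheory GRing.Theory Num.Theory.
Local Open Scope ring_scope.

(* Coefficients of the polynomial 1 - r t + b t^r (r >= 2, so the three
   monomials have distinct degrees 0, 1, r). *)
Definition den_coef (R : realFieldType) (r : nat) (b : R) (k : nat) : R :=
  if k == 0%N then 1
  else if k == 1%N then - (r%:R)
  else if k == r then b
  else 0.

(* c is the formal power series inverse of a: (sum a_k t^k)(sum c_k t^k) = 1,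
   i.e. the Cauchy product of a and c is 1. *)
Definition is_inv_series (R : realFieldType) (a c : nat -> R) : Prop :=
  forall n : nat, \sum_(i < n.+1) a i * c (n - i)%N = (n == 0%N)%:R.

(* Main.v *)
Require Import Defs.
From HB Require Import structures.
From mathcomp Require Import all_boot all_order all_algebra.
From mathcomp Require Import ring.
Import Order.TTheory GRing.Theory Num.Theory.
Local Open Scope ring_scope.

Lemma den_split (R : realFieldType) (r : nat) (b : R) (hr : (2 <= r)%N) k x :
  den_coef r b k * x =
  (if k == 0%N then x else 0) + (if k == 1%N then - r%:R * x else 0)
  + (if k == r then b * x else 0).
Proof.
rewrite /den_coef.
case: (k =P 0%N) => [->|_].
  by rewrite (_ : (0 == r)%N = false) ?mul1r ?addr0 //; case: r hr.
case: (k =P 1%N) => [->|_].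
  by rewrite (_ : (1 == r)%N = false) ?add0r ?addr0 //; case: r hr => [|[]].
by case: (k == r); rewrite ?add0r ?mul0r.
Qed.

Lemma recur (R : realFieldType) (r : nat) (b : R) (hr : (2 <= r)%N)
  (c : nat -> R) (hc : is_inv_series (den_coef r b) c) n :
  c n.+1 - r%:R * c n + (if (r < n.+2)%N then b * c (n.+1 - r)%N else 0) = 0.
Proof.
have := hc n.+1; rewrite /=.
under eq_bigr => i _ do rewrite (@den_split _ _ _ hr).
rewrite !big_split /=.
rewrite -!(big_mkcond (fun i : 'I_n.+2 => _)).
rewrite (big_ord1_eq _ (fun j => c (n.+1 - j)%N)) (big_ord1_eq _ (fun j => 1 *- r * c (n.+1 - j)%N)) (big_ord1_eq _ (fun j => b * c (n.+1 - j)%N)) /=.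
by rewrite subn0 subn1 /= mulNr.
Qed.

Theorem lemma2 (R : realFieldType) (r : nat) (b : R)
  (hr : (2 <= r)%N) (hb : b <= ((r - 1)%N)%:R ^+ (r - 1))
  (c : nat -> R) (hc : is_inv_series (den_coef r b) c) :
  forall n : nat, 0 < c n.
Proof.
set q : R := ((r - 1)%N)%:R.
have hq : 0 < q by rewrite /q ltr0n subn_gt0.
have hrq : r%:R = q + 1 by rewrite /q -[in LHS](subnK (ltnW hr)) natrD.
have c0 : c 0%N = 1.
  have := hc 0%N; rewrite big_ord1 /= subn0 /den_coef /= mul1r //.
suff H : forall n, 0 < c n /\ (forall j, (j <= n)%N -> q ^+ j * c (n - j)%N <= c n).
  by move=> n; case: (H n).
elim/ltn_ind => n IH.
case: n IH => [|m] IH.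
  split; first by rewrite c0 ltr01.
  by move=> j; rewrite leqn0 => /eqP ->; rewrite expr0 mul1r.
have [cm0 chm] := IH m (ltnSn m).
have step : q * c m <= c m.+1.
  have e := @recur _ _ _ hr _ hc m.
  have -> : c m.+1 = r%:R * c m - (if (r < m.+2)%N then b * c (m.+1 - r)%N else 0).
    set X := (if _ then _ else _) in e *.
    transitivity (c m.+1 - r%:R * c m + X + (r%:R * c m - X)); first ring.
    by rewrite e add0r.
  rewrite hrq mulrDl mul1r -addrA lerDl.
  case: ifP => hrm; last by rewrite subr0 ltW.
  have hj : (r - 1 <= m)%N by rewrite leq_subLR add1n -ltnS.
  have := chm _ hj.
  have -> : (m - (r - 1))%N = (m.+1 - r)%N by rewrite subnBA ?addn1 // ltnW.
  have [cpos _] := IH (m.+1 - r)%N (ltac:(by rewrite ltn_subrL (ltnW hr))).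
  move=> h1; rewrite subr_ge0; apply: le_trans h1.
  by rewrite ler_wpM2r // ltW.
split; first by apply: lt_le_trans step; rewrite mulr_gt0.
case=> [|j] hj; first by rewrite expr0 mul1r subn0.
rewrite subSS exprS -mulrA; apply: le_trans step.
apply: ler_wpM2l; first exact: ltW.
exact: chm.
Qed.
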